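(* Let $S\subseteq\mathbb{R}^m$ be a semialgebraic set. Then there exist $\mathcal N\in ISDnet(m,n,1)$ and $C\in\mathbb{N}$ such that for every $c\ge C$ and every $x\in\mathbb{R}^m$, $\mathrm{ODESolve}(\mathcal N,c,x,(0,0,0),1) = (0,\chi_S(x))$, where $0\in\mathbb{R}^n$ and $\chi_S$ is the characteristic function of $S$ ($\chi_S(x)=1$ if $x\in S$, $0$ otherwise).
   Context: $ISD(D)$ is the smallest set of functions $D\to\mathbb{R}$ containing all restrictions of real polynomials and closed under pointwise $\min$, $\max$; vector/matrix maps are ISD if all entries are. $ISDnet(m,n,1) := ISD(\mathbb{R}^m\times\mathbb{R}^{n+1}\times\mathbb{R},\ \mathbb{R}^{(n+1)\times(n+1)}\times\mathbb{R}^{n+1})$; for $\mathcal N$ in it write $\mathcal N(x,y,t,s)=(M(x,y,t,s),b(x,y,t,s))$. $\mathrm{clamp\text{-}sol}_c(M,b):=\mathrm{clamp}(M^{-1}b,-c,c)$ (componentwise $a_i\mapsto\min(\max(a_i,-c),c)$) if $M$ is invertible, and $0$ otherwise. $\mathrm{ODESolve}(\mathcal N,c,x,(y_0,t_0,s_0),s_{\mathrm{final}})$ denotes $(y(s_{\mathrm{final}}),t(s_{\mathrm{final}}))$ where $(y,t)$ is the exact solution of $\frac{d}{ds}(y,t)=\mathrm{clamp\text{-}sol}_c\big(M(x,y,t,s),b(x,y,t,s)\big)$ with $(y,t)(s_0)=(y_0,t_0)$. A semialgebraic set is a finite union of sets defined by finitely many polynomial equations and strict polynomial inequalities. *)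

(* Defs.v *)
From HB Require Import structures.
From mathcomp Require Import all_boot all_order all_algebra.
From mathcomp Require Import all_classical all_reals all_analysis.
From Stdlib Require Import List.
Set Implicit Arguments. Unset Strict Implicit. Unset Printing Implicit Defensive.
Import Order.TTheory GRing.Theory Num.Theory.
Import numFieldNormedType.Exports.
Local Open Scope classical_set_scope.
Local Open Scope ring_scope.

Section Defs.
Variable R : realType.

Inductive polyfun {D : Type} (Coord : (D -> R) -> Prop) : (D -> R) -> Prop :=
  | pf_const (a : R) : polyfun Coord (fun _ => a)
  | pf_coord (f : D -> R) : Coord f -> polyfun Coord f
  | pf_add (f g : D -> R) : polyfun Coord f -> polyfun Coord g ->
      polyfun Coord (fun z => f z + g z)
  | pf_mul (f g : D -> R) : polyfun Coord f -> polyfun Coord g ->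
      polyfun Coord (fun z => f z * g z).

Inductive isd {D : Type} (Coord : (D -> R) -> Prop) : (D -> R) -> Prop :=
  | isd_poly (f : D -> R) : polyfun Coord f -> isd Coord f
  | isd_min (f g : D -> R) : isd Coord f -> isd Coord g ->
      isd Coord (fun z => Num.min (f z) (g z))
  | isd_max (f g : D -> R) : isd Coord f -> isd Coord g ->
      isd Coord (fun z => Num.max (f z) (g z)).

Definition coordRm (m : nat) : (('I_m -> R) -> R) -> Prop :=
  fun f => exists i : 'I_m, f = fun x => x i.

(* Semialgebraic subset of R^m: finite union of sets, each defined by finitely
   many polynomial equations P = 0 and strict inequalities Q > 0. *)
Definition semialgebraic (m : nat) (S : set ('I_m -> R)) : Prop :=
  exists blocks : list (list (('I_m -> R) -> R) * list (('I_m -> R) -> R)),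
    Forall (fun B => Forall (polyfun (@coordRm m)) B.1 /\
                     Forall (polyfun (@coordRm m)) B.2) blocks /\
    forall x, S x <-> Exists (fun B => Forall (fun P => P x = 0) B.1 /\
                                      Forall (fun Q => 0 < Q x) B.2) blocks.

(* Domain R^m x R^(n+1) x R of an ISDnet(m,n,1); the middle block is the
   state (y,t) with y = first n coordinates, t = last coordinate. *)
Definition netdom (m n : nat) := (('I_m -> R) * ('I_n.+1 -> R) * R)%type.

Definition coordNet (m n : nat) : (netdom m n -> R) -> Prop :=
  fun f => (exists i : 'I_m, f = fun p => p.1.1 i)
        \/ (exists j : 'I_n.+1, f = fun p => p.1.2 j)
        \/ f = fun p => p.2.

Definition isd_net (m n : nat)
    (M : ('I_m -> R) -> ('I_n.+1 -> R) -> R -> 'M[R]_n.+1)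
    (b : ('I_m -> R) -> ('I_n.+1 -> R) -> R -> 'cV[R]_n.+1) : Prop :=
  (forall i j : 'I_n.+1,
      isd (@coordNet m n) (fun p => M p.1.1 p.1.2 p.2 i j)) /\
  (forall i : 'I_n.+1,
      isd (@coordNet m n) (fun p => b p.1.1 p.1.2 p.2 i ord0)).

Definition clamp (c a : R) : R := Num.min (Num.max a (- c)) c.

Definition clamp_sol (k : nat) (c : R) (M : 'M[R]_k) (b : 'cV[R]_k) : 'cV[R]_k :=
  if M \in unitmx then map_mx (clamp c) (invmx M *m b) else 0.

Definition ode_sol (m n : nat)
    (M : ('I_m -> R) -> ('I_n.+1 -> R) -> R -> 'M[R]_n.+1)
    (b : ('I_m -> R) -> ('I_n.+1 -> R) -> R -> 'cV[R]_n.+1)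
    (c : R) (x : 'I_m -> R) (z : R -> 'I_n.+1 -> R) : Prop :=
  (forall j, z 0 j = 0) /\
  (forall j, {within `[0, 1], continuous (fun s => z s j)}) /\
  (forall s : R, 0 < s < 1 -> forall j,
      is_derive s 1 (fun u => z u j)
        (clamp_sol c (M x (z s) s) (b x (z s) s) j ord0)).

End Defs.

(* Main.v *)
Require Import Defs.
From HB Require Import structures.
From mathcomp Require Import all_boot all_order all_algebra.
From mathcomp Require Import all_classical all_reals all_analysis.
From mathcomp Require Import ring lra.
Import Order.TTheory GRing.Theory Num.Theory.
Import numFieldNormedType.Exports.
Local Open Scope classical_set_scope.
Local Open Scope ring_scope.
Set Implicit Arguments. Unset Strict Implicit.

Lemma glue_derive (R : realType) (f g : R -> R) (a d : R) :
  is_derive a 1 f d -> is_derive a 1 g d -> f a = g a ->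
  is_derive a 1 (fun u => if u <= a then f u else g u) d.
Proof.
move=> [df Df] [dg Dg] fg.
move: df; rewrite /derivable => /cvg_ex [lf Hf].
move: dg; rewrite /derivable => /cvg_ex [lg Hg].
have Elf : lf = d by rewrite -Df /derive (cvg_lim _ Hf).
have Elg : lg = d by rewrite -Dg /derive (cvg_lim _ Hg).
subst lf lg.
have key : (fun k : R => k^-1 *: (((fun u => if u <= a then f u else g u) \o shift a) (k *: 1)
     - (fun u => if u <= a then f u else g u) a)) x @[x --> 0^'] --> d.
  apply/cvgrPdist_lt => e e0.
  move/cvgrPdist_lt : Hf => /(_ e e0) Hf'.
  move/cvgrPdist_lt : Hg => /(_ e e0) Hg'.
  near=> k.
  have kn0 : k != 0 by near: k; exact: nbhs_dnbhs_neq.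
  rewrite /= lexx.
  case: (ltP k 0) => kk.
    have -> : (k *: (1:R) + a <= a) = true by rewrite scaler1 gerDr ltW.
    by near: k.
  have kpos : 0 < k by rewrite lt_neqAle eq_sym kn0 kk.
  have -> : (k *: (1:R) + a <= a) = false.
    by apply/negbTE; rewrite -ltNge scaler1 ltrDr.
  rewrite fg. by near: k.
split; first exact: cvgP key.
exact: cvg_lim key.
Unshelve. all: by end_near.
Qed.

Section Psi.
Variable R : realType.
Definition pol3 (u : R) := 3 * u ^+ 2 - 2 * u ^+ 3.
Definition psi (u : R) := if u <= 0 then 0 else if u <= 1 then pol3 u else 1.
Definition dpsi (u : R) := if u <= 0 then 0 else if u <= 1 then 6 * u * (1 - u) else 0.

Lemma pol3_derive (u : R) : is_derive u 1 pol3 (6 * u * (1 - u)).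
Proof. apply: is_derive_eq; rewrite /GRing.scale /=; ring. Qed.

Definition psi_in (u : R) := if u <= 1 then pol3 u else cst 1 u.

Lemma psi_in_derive1 : is_derive (1:R) 1 psi_in 0.
Proof.
apply: glue_derive.
  apply: is_derive_eq (pol3_derive 1) _; ring.
by rewrite /pol3 /cst; ring.
Qed.

Lemma psi_derive (u : R) : is_derive u 1 psi (dpsi u).
Proof.
have psiE : psi = fun v => if v <= 0 then cst 0 v else psi_in v by [].
case: (ltgtP u 0) => hu.
- apply: (near_eq_is_derive (f := cst 0)); last first.
    by rewrite /dpsi (ltW hu); exact: is_derive_cst.
  near=> v. have : v < 0 by near: v; exact: lt_nbhsl.
  by move=> /ltW hv; rewrite /psi hv.
-
  case: (ltgtP u 1) => hu1.
  + apply: (near_eq_is_derive (f := pol3)); last first.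
      by rewrite /dpsi leNgt hu /= (ltW hu1); exact: pol3_derive.
    near=> v.
    have h0 : 0 < v by near: v; exact: lt_nbhsr.
    have h1 : v < 1 by near: v; exact: lt_nbhsl.
    by rewrite /psi leNgt h0 /= (ltW h1).
  + apply: (near_eq_is_derive (f := cst (1:R))); last first.
      by rewrite /dpsi leNgt hu /= leNgt hu1 /=; exact: is_derive_cst.
    near=> v.
    have h0 : 1 < v by near: v; exact: lt_nbhsr.
    have h0' : 0 < v by apply: lt_trans h0; exact: ltr01.
    by rewrite /psi leNgt h0' /= leNgt h0.
  + subst u.
    apply: (near_eq_is_derive (f := psi_in)); last first.
      rewrite /dpsi ler10 lexx; apply: is_derive_eq psi_in_derive1 _; ring.
    near=> v.
    have h0 : 0 < v by near: v; exact: lt_nbhsr.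
    by rewrite /psi leNgt h0.
- subst u. rewrite psiE.
  have -> : dpsi 0 = 0 by rewrite /dpsi lexx.
  apply: glue_derive; last by rewrite /psi_in ler01 /pol3 /cst; ring.
  apply: (near_eq_is_derive (f := pol3)); last first.
    apply: is_derive_eq (pol3_derive 0) _; ring.
  near=> v.
  have h1 : v < 1 by near: v; apply: lt_nbhsl; exact: ltr01.
  by rewrite /psi_in (ltW h1).
Unshelve. all: by end_near.
Qed.
End Psi.


Section IsdLemmas.
Variable R : realType.
Variable D : Type.
Variable Coord : (D -> R) -> Prop.

Lemma minD (a b c : R) : Num.min a b + c = Num.min (a + c) (b + c).
Proof. by case: (leP a b) => h; [rewrite !min_l // lerD2r | rewrite !min_r // ?lerD2r ltW]. Qed.
Lemma maxD (a b c : R) : Num.max a b + c = Num.max (a + c) (b + c).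
Proof. by case: (leP a b) => h; [rewrite !max_r // lerD2r | rewrite !max_l // ?lerD2r ltW]. Qed.

Lemma isd_ext (f g : D -> R) : (forall z, f z = g z) -> isd Coord f -> isd Coord g.
Proof. by move=> fg; have -> : f = g by apply: funext. Qed.

Lemma pf_ext (f g : D -> R) : (forall z, f z = g z) -> polyfun Coord f -> polyfun Coord g.
Proof. by move=> fg; have -> : f = g by apply: funext. Qed.

Lemma isd_cst (a : R) : isd Coord (fun _ => a).
Proof. by apply: isd_poly; apply: pf_const. Qed.

Lemma isd_add_poly (f g : D -> R) : isd Coord f -> polyfun Coord g ->
  isd Coord (fun z => f z + g z).
Proof.
move=> hf hg; elim: hf => {f}.
- by move=> f pf; apply: isd_poly; apply: pf_add.
- move=> f1 f2 _ h1 _ h2.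
  apply: isd_ext (isd_min h1 h2) => z; by rewrite minD.
- move=> f1 f2 _ h1 _ h2.
  apply: isd_ext (isd_max h1 h2) => z; by rewrite maxD.
Qed.

Lemma isd_add (f g : D -> R) : isd Coord f -> isd Coord g ->
  isd Coord (fun z => f z + g z).
Proof.
move=> hf hg; elim: hf => {f}.
- move=> f pf; apply: isd_ext (isd_add_poly hg pf) => z; by rewrite addrC.
- move=> f1 f2 _ h1 _ h2.
  apply: isd_ext (isd_min h1 h2) => z; by rewrite minD.
- move=> f1 f2 _ h1 _ h2.
  apply: isd_ext (isd_max h1 h2) => z; by rewrite maxD.
Qed.

Lemma isd_scale (c : R) (f : D -> R) : isd Coord f -> isd Coord (fun z => c * f z).
Proof.
elim => {f}.
- by move=> f pf; apply: isd_poly; apply: pf_mul => //; apply: pf_const.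
- move=> f1 f2 _ h1 _ h2; case: (leP 0 c) => hc.
    by apply: isd_ext (isd_min h1 h2) => z; rewrite minr_pMr.
  by apply: isd_ext (isd_max h1 h2) => z; rewrite minr_nMr // ltW.
- move=> f1 f2 _ h1 _ h2; case: (leP 0 c) => hc.
    by apply: isd_ext (isd_max h1 h2) => z; rewrite maxr_pMr.
  by apply: isd_ext (isd_min h1 h2) => z; rewrite maxr_nMr // ltW.
Qed.

Lemma isd_sum (T : Type) (r : seq T) (F : T -> D -> R) :
  (forall i, isd Coord (F i)) -> isd Coord (fun z => \sum_(i <- r) F i z).
Proof.
move=> hF; elim: r => [|i r ih].
  by apply: isd_ext (isd_cst 0) => z; rewrite big_nil.
by apply: isd_ext (isd_add (hF i) ih) => z; rewrite big_cons.
Qed.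

Lemma isd_bigmin (T : Type) (r : seq T) (F : T -> D -> R) :
  (forall i, isd Coord (F i)) ->
  isd Coord (fun z => \big[Num.min/1]_(i <- r) F i z).
Proof.
move=> hF; elim: r => [|i r ih].
  by apply: isd_ext (isd_cst 1) => z; rewrite big_nil.
by apply: isd_ext (isd_min (hF i) ih) => z; rewrite big_cons.
Qed.

End IsdLemmas.

Lemma polyfun_comp (R : realType) (D D' : Type) (C : (D -> R) -> Prop)
  (C' : (D' -> R) -> Prop) (h : D' -> D) :
  (forall f, C f -> polyfun C' (fun z => f (h z))) ->
  forall f, polyfun C f -> polyfun C' (fun z => f (h z)).
Proof.
move=> hC f; elim => {f}.
- move=> a; exact: pf_const.
- move=> f cf; exact: hC.
- move=> f g _ hf _ hg; exact: pf_add.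
- move=> f g _ hf _ hg; exact: pf_mul.
Qed.

Lemma isd_comp (R : realType) (D D' : Type) (C : (D -> R) -> Prop)
  (C' : (D' -> R) -> Prop) (h : D' -> D) :
  (forall f, C f -> polyfun C' (fun z => f (h z))) ->
  forall f, isd C f -> isd C' (fun z => f (h z)).
Proof.
move=> hC f; elim => {f}.
- move=> f pf; apply: isd_poly; exact: polyfun_comp pf.
- move=> f g _ hf _ hg; exact: isd_min.
- move=> f g _ hf _ hg; exact: isd_max.
Qed.

Section Sem.
Variable R : realType.
Variable m : nat.
Local Notation fn := (('I_m -> R) -> R).
Local Notation block := (list fn * list fn)%type.
Local Notation atom := (bool * fn)%type.

Definition qf (Qs : list fn) (x : 'I_m -> R) : R :=
  foldr (fun Q acc => Num.min (Q x) acc) 1 Qs.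
Definition af (Ps : list fn) (x : 'I_m -> R) : R :=
  foldr (fun P acc => Num.max (Num.max (P x) (- P x)) acc) 0 Ps.
Definition bsem (B : block) (x : 'I_m -> R) : bool :=
  all (fun P => P x == 0) B.1 && all (fun Q => 0 < Q x) B.2.

Lemma qf_pos Qs x : (0 < qf Qs x) = all (fun Q => 0 < Q x) Qs.
Proof. by elim: Qs => [|Q Qs ih] /=; [exact: ltr01 | rewrite lt_min ih]. Qed.

Lemma af_pos Ps x : (0 < af Ps x) = ~~ all (fun P => P x == 0) Ps.
Proof.
elim: Ps => [|P Ps ih] /=; first by rewrite ltxx.
rewrite lt_max ih negb_and lt_max oppr_gt0; congr (_ || _).
by case: (ltgtP (P x) 0).
Qed.

Definition sg (b : bool) : R := if b then 1 else -1.
Definition atval (L : list atom) (x : 'I_m -> R) : R :=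
  \sum_(a <- L) sg a.1 * ((0 < a.2 x)%R)%:R.

Definition blk_atoms (B : block) : list atom :=
  [:: (true, qf B.2); (false, fun x => Num.min (qf B.2 x) (af B.1 x))].

Lemma blk_sem B x : atval (blk_atoms B) x = (bsem B x)%:R.
Proof.
rewrite /atval !big_cons big_nil /= lt_min qf_pos af_pos /bsem.
case: (all _ B.1); case: (all _ B.2) => /=; rewrite ?mulr1 ?mulr0; ring.
Qed.

Definition inter (B C : block) : block := (B.1 ++ C.1, B.2 ++ C.2).
Lemma inter_sem B C x : bsem (inter B C) x = bsem B x && bsem C x.
Proof.
rewrite /bsem /inter /= !all_cat.
by case: (all _ B.1); case: (all _ B.2); case: (all _ C.1); case: (all _ C.2).
Qed.

Definition negL (L : list atom) : list atom := map (fun a => (~~ a.1, a.2)) L.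
Lemma negL_sem L x : atval (negL L) x = - atval L x.
Proof.
rewrite /atval big_map -sumrN; apply: eq_bigr => a _ /=.
by case: a => [[] f]; rewrite /sg /= ?mulNr ?mul1r ?opprK.
Qed.

Lemma atval_cat L1 L2 x : atval (L1 ++ L2) x = atval L1 x + atval L2 x.
Proof. by rewrite /atval big_cat. Qed.

Fixpoint dec (C : block) (Bs : list block) : list atom :=
  match Bs with
  | [::] => [::]
  | B :: Bs' => blk_atoms (inter C B) ++ dec C Bs' ++ negL (dec (inter C B) Bs')
  end.

Lemma dec_sem Bs C x : atval (dec C Bs) x = (bsem C x && has (fun B => bsem B x) Bs)%:R.
Proof.
elim: Bs C => [|B Bs ih] C.
  by rewrite /atval big_nil andbF.
have -> : dec C (B :: Bs) = blk_atoms (inter C B) ++ dec C Bs ++ negL (dec (inter C B) Bs) by [].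
rewrite !atval_cat negL_sem blk_sem !ih !inter_sem /=.
case: (bsem C x); case: (bsem B x); case: (has _ Bs) => /=; ring.
Qed.

Lemma in_cat_or (T : Type) (l1 l2 : list T) (a : T) :
  List.In a (l1 ++ l2) -> List.In a l1 \/ List.In a l2.
Proof. elim: l1 => [|b l1 ih] /=; [by right | by move=> [->|/ih []]; auto]. Qed.

Definition goodB (B : block) : Prop :=
  (forall P, List.In P B.1 -> polyfun (@coordRm R m) P) /\
  (forall Q, List.In Q B.2 -> polyfun (@coordRm R m) Q).

Lemma qf_isd Qs : (forall Q, List.In Q Qs -> polyfun (@coordRm R m) Q) ->
  isd (@coordRm R m) (qf Qs).
Proof.
elim: Qs => [|Q Qs ih] hQ /=.
  exact: isd_cst.
apply: isd_min; first by apply: isd_poly; apply: hQ; left.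
by apply: ih => P hP; apply: hQ; right.
Qed.

Lemma af_isd Ps : (forall P, List.In P Ps -> polyfun (@coordRm R m) P) ->
  isd (@coordRm R m) (af Ps).
Proof.
elim: Ps => [|P Ps ih] hP /=.
  exact: isd_cst.
have pP : polyfun (@coordRm R m) P by apply: hP; left.
apply: isd_max; last by apply: ih => Q hQ; apply: hP; right.
apply: isd_max; first exact: isd_poly.
apply: isd_poly; apply: pf_ext (pf_mul (pf_const _ (-1)) pP) => z; by rewrite mulN1r.
Qed.

Lemma inter_good B C : goodB B -> goodB C -> goodB (inter B C).
Proof.
move=> [hB1 hB2] [hC1 hC2]; split => P hP; case: (in_cat_or hP); auto.
Qed.

Lemma dec_isd Bs C : goodB C -> (forall B, List.In B Bs -> goodB B) ->
  forall a, List.In a (dec C Bs) -> isd (@coordRm R m) a.2.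
Proof.
elim: Bs C => [|B Bs ih] C hC hBs a //.
have gB : goodB B by apply: hBs; left.
have gCB := inter_good hC gB.
have hBs' : forall B', List.In B' Bs -> goodB B' by move=> B' h; apply: hBs; right.
have -> : dec C (B :: Bs) = blk_atoms (inter C B) ++ (dec C Bs ++ negL (dec (inter C B) Bs)) by [].
move=> hin; case: (in_cat_or hin) => [ha|hin2].
  case: gCB => g1 g2.
  move: ha => /= [<-|[<-|[]]] /=; first exact: qf_isd.
  by apply: isd_min; [exact: qf_isd | exact: af_isd].
case: (in_cat_or hin2) => ha.
- exact: ih ha.
- move: ha => /List.in_map_iff [a' [<- ha']] /=.
  exact: ih ha'.
Qed.

End Sem.

Section Main.
Variable R : realType.
Variable m : nat.
Local Notation fn := (('I_m -> R) -> R).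
Local Notation atom := (bool * fn)%type.
Variable L : list atom.
Local Notation K := (size L).
Definition dflt : atom := (true, fun _ => 0).
Definition sgk (k : nat) : R := @sg R (nth dflt L k).1.
Definition gk (k : nat) : fn := (nth dflt L k).2.
Definition uk (k : nat) (s : R) : R := K%:R * s - k%:R.
Definition ddk (k : nat) (s : R) : R := Num.max 0 (- (uk k s * (1 - uk k s))).
Definition Fk (k : nat) (x : 'I_m -> R) (s : R) : R :=
  Num.max (Num.max (gk k x) 0) (ddk k s).
Definition mval (x : 'I_m -> R) (s : R) : R := \big[Num.min/1]_(k < K) Fk k x s.
Definition beta (s : R) : R := \sum_(k < K) sgk k * (K%:R * dpsi (uk k s)).
Definition dk (k : nat) (x : 'I_m -> R) : R := ((0 < gk k x)%R)%:R.
Definition Tf (x : 'I_m -> R) (s : R) : R := \sum_(k < K) sgk k * (dk k x * psi (uk k s)).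

Lemma bigmin_pos (T : eqType) (r : seq T) (F : T -> R) :
  (0 < \big[Num.min/1]_(i <- r) F i) = all (fun i => 0 < F i) r.
Proof. by elim: r => [|i r ih]; rewrite ?big_nil ?big_cons ?ltr01 //= lt_min ih. Qed.

Lemma Fk_ge0 k x s : 0 <= Fk k x s.
Proof. by rewrite /Fk le_max le_max lexx orbT. Qed.

Lemma mval_ge0 x s : 0 <= mval x s.
Proof.
rewrite /mval; apply: (big_ind (fun v : R => 0 <= v)).
- exact: ler01.
- by move=> a b ha hb; rewrite le_min ha hb.
- move=> k _; exact: Fk_ge0.
Qed.

Lemma mval_pos x s : (0 < mval x s) = [forall k : 'I_K, 0 < Fk k x s].
Proof.
rewrite /mval bigmin_pos; apply/allP/forallP => h k; first by apply: h; exact: mem_index_enum.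
by move=> _; exact: h.
Qed.

Lemma ddk_zero k s : 0 <= uk k s <= 1 -> ddk k s = 0.
Proof.
move=> /andP [h0 h1]; rewrite /ddk; apply/max_idPl.
rewrite oppr_le0; apply: mulr_ge0 => //; by rewrite subr_ge0.
Qed.

Lemma ddk_pos k s : (uk k s < 0) || (1 < uk k s) -> 0 < ddk k s.
Proof.
move=> h; rewrite /ddk lt_max; apply/orP; right.
case/orP: h => h; nra.
Qed.

Lemma window (k j : nat) s : (j != k) -> 0 < uk k s < 1 -> (uk j s < 0) || (1 < uk j s).
Proof.
move=> jk /andP [h0 h1].
have E : uk j s = uk k s + (k%:R - j%:R) by rewrite /uk; ring.
rewrite E; case: (ltngtP j k) => hjk.
- apply/orP; right.
  have : (j.+1)%:R <= (k%:R : R) by rewrite ler_nat.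
  rewrite -addn1 natrD => hh; lra.
- apply/orP; left.
  have : (k.+1)%:R <= (j%:R : R) by rewrite ler_nat.
  rewrite -addn1 natrD => hh; lra.
- by move: jk; rewrite hjk eqxx.
Qed.

Lemma dpsi_nz (u : R) : dpsi u != 0 -> 0 < u < 1.
Proof.
rewrite /dpsi; case: (leP u 0) => h0; first by rewrite eqxx.
case: (leP u 1) => h1; last by rewrite eqxx.
move=> hne; apply/andP; split => //.
rewrite lt_neqAle h1 andbT.
apply/eqP => hu; move: hne; rewrite hu; apply/negP; rewrite negbK; apply/eqP; ring.
Qed.

Lemma key_term (k : 'I_K) x s : dpsi (uk k s) != 0 -> (0 < mval x s) = (0 < gk k x).
Proof.
move=> /dpsi_nz hu.
have hd : ddk k s = 0 by apply: ddk_zero; case/andP: hu => a b; rewrite ltW // ltW.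
rewrite mval_pos; apply/forallP/idP.
  move=> /(_ k); rewrite /Fk hd lt_max ltxx orbF lt_max ltxx orbF; by [].
move=> hg j; rewrite /Fk.
case: (eqVneq j k) => [->|hjk].
  by rewrite lt_max lt_max hg.
rewrite lt_max; apply/orP; right; apply: ddk_pos.
apply: (@window k j s) => //.
Qed.

Lemma deriv_identity x s :
  \sum_(k < K) sgk k * (dk k x * (dpsi (uk k s) * K%:R)) =
  if mval x s != 0 then beta s else 0.
Proof.
have hge := mval_ge0 x s.
have -> : (mval x s != 0) = (0 < mval x s) by rewrite lt_def hge andbT.
case: ifP => hpos.
  rewrite /beta; apply: eq_bigr => k _.
  case: (eqVneq (dpsi (uk k s)) 0) => hd; first by rewrite hd; ring.
  by rewrite /dk -(key_term x hd) hpos /=; ring.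
apply: big1 => k _.
case: (eqVneq (dpsi (uk k s)) 0) => hd; first by rewrite hd; ring.
by rewrite /dk -(key_term x hd) hpos /=; ring.
Qed.

Lemma Tf_derive x (s : R) :
  is_derive s 1 (Tf x) (\sum_(k < K) sgk k * (dk k x * (dpsi (uk k s) * K%:R))).
Proof.
have -> : Tf x = \sum_(k < K) (fun v => sgk k * (dk k x * psi (uk k v))).
  by rewrite fct_sumE; apply/funext => v.
apply: is_derive_sum => k.
have E1 : uk k = fun v => K%:R * v - k%:R by [].
have h1 : is_derive s 1 (uk k) K%:R.
  rewrite E1; apply: is_derive_eq; rewrite /GRing.scale /=; ring.
have h2 := is_derive1_comp (psi_derive (uk k s)) h1.
have h3 := is_deriveZ (sgk k * dk k x) h2.
have E : (fun v => sgk k * (dk k x * psi (uk k v))) = (sgk k * dk k x) \*: (@psi R \o uk k).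
  by apply/funext => v; rewrite /= /GRing.scale /= mulrA.
rewrite E; apply: is_derive_eq h3 _.
by rewrite /GRing.scale /= !mulrA.
Qed.

Lemma Tf0 x : Tf x 0 = 0.
Proof.
apply: big1 => k _.
have : uk k 0 <= 0 by rewrite /uk mulr0 sub0r oppr_le0.
by rewrite /psi => ->; rewrite !mulr0.
Qed.

Lemma Tf1 x : Tf x 1 = \sum_(k < K) sgk k * dk k x.
Proof.
apply: eq_bigr => k _.
have hk : (k.+1)%:R <= (K%:R : R) by rewrite ler_nat.
move: hk; rewrite -addn1 natrD => hk.
have h1 : 1 <= uk k 1 by rewrite /uk mulr1; lra.
have h0 : (uk k 1 <= 0) = false by apply/negbTE; rewrite -ltNge; lra.
rewrite /psi h0.
case: (leP (uk k 1) 1) => h.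
  have -> : uk k 1 = 1 by apply/eqP; rewrite eq_le h h1.
  by rewrite /pol3; ring.
by rewrite mulr1.
Qed.

Lemma atval_sum x : atval L x = \sum_(k < K) sgk k * dk k x.
Proof. by rewrite /atval (big_nth dflt) big_mkord. Qed.

Definition Mnet (x : 'I_m -> R) (y : 'I_2 -> R) (s : R) : 'M[R]_2 :=
  diag_mx (\row_(i < 2) (if i == ord_max then 1 else mval x s)).
Definition bnet (x : 'I_m -> R) (y : 'I_2 -> R) (s : R) : 'cV[R]_2 :=
  \col_(i < 2) (if i == ord_max then beta s else 0).

Lemma clamp_id (c a : R) : `|a| <= c -> clamp c a = a.
Proof.
rewrite ler_norml => /andP [h1 h2].
by rewrite /clamp (max_idPl h1) (min_idPl h2).
Qed.

Lemma clamp_sol_net c x y s (j : 'I_2) : 0 <= c -> `|beta s| <= c ->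
  clamp_sol c (Mnet x y s) (bnet x y s) j ord0 =
  if j == ord_max then (if mval x s != 0 then beta s else 0) else 0.
Proof.
move=> hc hb; rewrite /clamp_sol.
have hdet : \det (Mnet x y s) = mval x s.
  rewrite /Mnet det_diag big_ord_recl big_ord1 !mxE /=; ring.
have hMb : Mnet x y s *m bnet x y s = bnet x y s.
  apply/matrixP => i k; rewrite /Mnet mul_diag_mx !mxE.
  by case: (i == ord_max); rewrite ?mul1r ?mulr0.
rewrite unitmxE hdet unitfE.
case: (eqVneq (mval x s) 0) => hm /=.
  by rewrite mxE; case: (j == ord_max).
rewrite -{1}hMb mulKmx ?unitmxE ?hdet ?unitfE // !mxE.
case: (j == ord_max); first exact: clamp_id.
by apply: clamp_id; rewrite normr0.
Qed.

Lemma dpsi_bound (u : R) : 0 <= dpsi u <= 2.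
Proof.
rewrite /dpsi; case: (leP u 0) => h0; first by rewrite lexx ler0n.
case: (leP u 1) => h1; last by rewrite lexx ler0n.
apply/andP; split; nra.
Qed.

Lemma beta_bound s : `|beta s| <= (2 * K * K)%:R.
Proof.
rewrite /beta; apply: le_trans (ler_norm_sum _ _ _) _.
apply: (@le_trans _ _ (\sum_(k < K) (K%:R * 2))).
  apply: ler_sum => k _.
  have /andP [d0 d1] := dpsi_bound (uk k s).
  have hs : `|sgk k| = 1 by rewrite /sgk /sg; case: (nth dflt L k).1; rewrite ?normrN normr1.
  rewrite normrM hs mul1r normrM ger0_norm // ger0_norm ?ler0n //.
  by apply: ler_wpM2l => //; rewrite ler0n.
rewrite sumr_const card_ord -mulr_natr !natrM; lra.
Qed.

Local Notation CN := (@coordNet R m 1).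

Lemma pf_s : polyfun CN (fun p => p.2).
Proof. by apply: pf_coord; right; right. Qed.

Lemma pf_uk (k : nat) : polyfun CN (fun p => uk k p.2).
Proof.
apply: pf_ext (pf_add (pf_mul (pf_const _ K%:R) pf_s) (pf_const _ (- k%:R))) => p.
by rewrite /uk.
Qed.

Lemma ddk_isd (k : nat) : isd CN (fun p => ddk k p.2).
Proof.
apply: isd_max; first exact: isd_cst.
apply: isd_poly.
apply: pf_ext (pf_mul (pf_const _ (-1)) (pf_mul (pf_uk k)
   (pf_add (pf_const _ 1) (pf_mul (pf_const _ (-1)) (pf_uk k))))) => p /=.
ring.
Qed.

Lemma dpsi_max (u : R) : dpsi u = Num.max 0 (6 * u * (1 - u)).
Proof.
rewrite /dpsi; case: (leP u 0) => h0.
  by apply/esym/max_idPl; nra.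
case: (leP u 1) => h1.
  by apply/esym/max_idPr; nra.
by apply/esym/max_idPl; nra.
Qed.

Lemma beta_isd : isd CN (fun p => beta p.2).
Proof.
apply: isd_sum => k.
apply: isd_ext (isd_scale (sgk k * K%:R) _) => [p|]; first by rewrite mulrA.
apply: isd_ext (isd_max (isd_cst _ 0) (isd_poly (pf_mul (pf_mul (pf_const _ 6) (pf_uk k))
   (pf_add (pf_const _ 1) (pf_mul (pf_const _ (-1)) (pf_uk k)))))) => p /=.
rewrite dpsi_max; congr (Num.max _ _); ring.
Qed.

Lemma gk_isd (k : nat) : isd (@coordRm R m) (gk k) -> isd CN (fun p => gk k p.1.1).
Proof.
apply: (isd_comp (h := fun p : netdom R m 1 => p.1.1)).
move=> f [i ->]; apply: pf_coord; left; by exists i.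
Qed.

Lemma mval_isd : (forall k : 'I_K, isd (@coordRm R m) (gk k)) ->
  isd CN (fun p => mval p.1.1 p.2).
Proof.
move=> hg; apply: isd_bigmin => k.
apply: isd_max; last exact: ddk_isd.
apply: isd_max; [exact: gk_isd | exact: isd_cst].
Qed.

Lemma net_isd : (forall k : 'I_K, isd (@coordRm R m) (gk k)) -> isd_net Mnet bnet.
Proof.
move=> hg; split => i.
  move=> j; rewrite /Mnet.
  case: (eqVneq i j) => [<-|hij].
    case: (eqVneq i ord_max) => hi.
      by apply: isd_ext (isd_cst _ 1) => p; rewrite !mxE hi eqxx.
    apply: isd_ext (mval_isd hg) => p; rewrite !mxE eqxx (negbTE hi) //.
  by apply: isd_ext (isd_cst _ 0) => p; rewrite !mxE (negbTE hij).
case: (eqVneq i ord_max) => hi.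
  by apply: isd_ext beta_isd => p; rewrite !mxE hi.
by apply: isd_ext (isd_cst _ 0) => p; rewrite !mxE (negbTE hi).
Qed.

Definition znet (x : 'I_m -> R) : R -> 'I_2 -> R :=
  fun s j => if j == ord_max then Tf x s else 0.

Lemma Tf_wcont x : {within `[0, 1], continuous (Tf x)}.
Proof.
apply: derivable_within_continuous => s _.
by have [] := Tf_derive x s.
Qed.

Lemma exist_sol c x : (2 * K * K)%:R <= c -> ode_sol Mnet bnet c x (znet x).
Proof.
move=> hc.
have c0 : 0 <= c by apply: le_trans hc; rewrite ler0n.
have hb : forall s, `|beta s| <= c by move=> s; apply: le_trans (beta_bound s) hc.
split; [|split].
- by move=> j; rewrite /znet Tf0; case: (j == ord_max).
- move=> j; rewrite /znet; case: (j == ord_max); first exact: Tf_wcont.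
  apply: derivable_within_continuous => s _; by have [] := is_derive_cst (0:R) s 1.
- move=> s hs j; rewrite clamp_sol_net // /znet.
  case: (j == ord_max).
    rewrite -deriv_identity; exact: Tf_derive.
  exact: is_derive_cst.
Qed.

Lemma uniq_sol c x z : (2 * K * K)%:R <= c -> ode_sol Mnet bnet c x z ->
  (forall j : 'I_2, j != ord_max -> z 1 j = 0) /\ z 1 ord_max = Tf x 1.
Proof.
move=> hc [hz0 [hzc hzd]].
have c0 : 0 <= c by apply: le_trans hc; rewrite ler0n.
have hb : forall s, `|beta s| <= c by move=> s; apply: le_trans (beta_bound s) hc.
split.
  move=> j hj.
  have hd : forall s : R, s \in `]0, 1[ -> is_derive s 1 (fun u => z u j) ((fun _ => (0:R)) s).
    move=> s hs; have hs' : 0 < s < 1 by move: hs; rewrite in_itv.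
    have := hzd s hs' j; rewrite clamp_sol_net // (negbTE hj); by [].
  have [t _ ht] := @MVT R (fun u => z u j) (fun _ => 0) 0 1 ltr01 hd (hzc j).
  by move: ht; rewrite hz0 mul0r subr0.
pose f := fun u => z u ord_max - Tf x u.
have hfc : {within `[0, 1], continuous f}.
  move=> t; apply: continuousB; [exact: hzc | exact: Tf_wcont].
have hd : forall s : R, s \in `]0, 1[ -> is_derive s 1 f ((fun _ => (0:R)) s).
  move=> s hs; have hs' : 0 < s < 1 by move: hs; rewrite in_itv.
  have h1 := hzd s hs' ord_max; rewrite clamp_sol_net // eqxx in h1.
  have h2 := Tf_derive x s; rewrite deriv_identity in h2.
  by apply: is_derive_eq (is_deriveB h1 h2) _; rewrite subrr.
have [t _ ht] := @MVT R f (fun _ => 0) 0 1 ltr01 hd hfc.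
move: ht; rewrite /f hz0 Tf0 mul0r => ht; lra.
Qed.

End Main.

Lemma Forall_all_iff (T : Type) (l : list T) (P : T -> Prop) (p : pred T) :
  (forall a, P a <-> p a) -> (List.Forall P l <-> all p l).
Proof.
move=> h; elim: l => [|a l ih] /=; split.
- by [].
- by move=> _; constructor.
- move=> H; inversion H; subst; apply/andP; split; [exact/h | exact/ih].
- by move/andP=> [ha hl]; constructor; [exact/h | exact/ih].
Qed.

Lemma Exists_has_iff (T : Type) (l : list T) (P : T -> Prop) (p : pred T) :
  (forall a, P a <-> p a) -> (List.Exists P l <-> has p l).
Proof.
move=> h; elim: l => [|a l ih] /=; split.
- by move=> H; inversion H.
- by [].
- move=> H; inversion H; subst; apply/orP; [left; exact/h | right; exact/ih].
- by case/orP => [ha|hl]; [apply: List.Exists_cons_hd; exact/h | apply: List.Exists_cons_tl; exact/ih].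
Qed.

Lemma nth_In_seq (T : Type) (d : T) (l : list T) (k : nat) :
  (k < size l)%N -> List.In (nth d l k) l.
Proof.
elim: l k => [|a l ih] [|k] //=; first by left.
by move=> hk; right; apply: ih.
Qed.

Theorem mainTheorem13 (R : realType) (m : nat) (S : set ('I_m -> R)) :
  semialgebraic S ->
  exists (n : nat)
         (M : ('I_m -> R) -> ('I_n.+1 -> R) -> R -> 'M[R]_n.+1)
         (b : ('I_m -> R) -> ('I_n.+1 -> R) -> R -> 'cV[R]_n.+1)
         (C : nat),
    isd_net M b /\
    forall (c : R), (C%:R <= c) -> forall x : 'I_m -> R,
      (exists z : R -> 'I_n.+1 -> R, ode_sol M b c x z) /\
      (forall z : R -> 'I_n.+1 -> R, ode_sol M b c x z ->
         (forall j : 'I_n.+1, j != ord_max -> z 1 j = 0) /\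
         z 1 ord_max = \1_S x).
Proof.
move=> [blocks [hgood hS]].
pose L := dec ([::], [::]) blocks.
exists 1%N, (Mnet L), (bnet L), (2 * size L * size L)%N.
split.
  apply: net_isd => k.
  apply: (@dec_isd R m blocks ([::], [::])).
  - by split => P [].
  - move=> B hB; move/List.Forall_forall: hgood => /(_ B hB) [h1 h2].
    by split => P hP; [move/List.Forall_forall: h1; apply | move/List.Forall_forall: h2; apply].
  - exact: nth_In_seq.
move=> c hc x; split.
  by exists (znet L x); exact: exist_sol.
move=> z hz; have [h1 h2] := uniq_sol hc hz; split => //.
rewrite h2 Tf1 -atval_sum dec_sem /= indicE.
suff E : has (fun B => bsem B x) blocks = (x \in S) by rewrite E.
have hB : forall B : list (('I_m -> R) -> R) * list (('I_m -> R) -> R),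
    (List.Forall (fun P => P x = 0) B.1 /\ List.Forall (fun Q => 0 < Q x) B.2) <-> bsem B x.
  move=> B; rewrite /bsem.
  have e1 := @Forall_all_iff _ B.1 (fun P => P x = 0) (fun P => P x == 0) (fun P => rwP eqP).
  have e2 := @Forall_all_iff _ B.2 (fun Q => 0 < Q x) (fun Q => 0 < Q x) (fun Q => iff_refl _).
  split.
    by move=> [f1 f2]; apply/andP; split; [apply/e1 | apply/e2].
  by move/andP=> [f1 f2]; split; [apply/e1 | apply/e2].
have e := @Exists_has_iff _ blocks _ (fun B => bsem B x) hB.
apply/idP/idP.
  by move=> hh; rewrite in_setE; apply/hS; apply/e.
by rewrite in_setE => /hS hh; apply/e.
Qed.
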